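(* Let $M=M_1\oplus M_2$ be a right $R$-module which is a duo module (or a distributive module). Then $M$ is principally Goldie*-lifting if and only if both $M_1$ and $M_2$ are principally Goldie*-lifting.
   Context: $R$ is an associative ring with identity; modules are unital right $R$-modules. A submodule $N$ of $M$ is fully invariant if $f(N)\subseteq N$ for every $f\in\mathrm{End}(M)$; $M$ is a duo module if every submodule is fully invariant. $M$ is distributive if for all submodules $A,B,C$, $A+(B\cap C)=(A+B)\cap(A+C)$ (equivalently $A\cap(B+C)=(A\cap B)+(A\cap C)$). $K\ll N$ means $K$ is small in $N$. For submodules $X,Y$ of a module $N$, $X\,\beta^*\,Y$ in $N$ means $(X+Y)/X\ll N/X$ and $(X+Y)/Y\ll N/Y$. A module $N$ is principally Goldie*-lifting if for every cyclic submodule $X$ of $N$ there is a direct summand $D$ of $N$ with $X\,\beta^*\,D$ in $N$. *)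

(* Defs.v *)
From HB Require Import structures.
From mathcomp Require Import all_boot all_order all_algebra.
Set Implicit Arguments. Unset Strict Implicit. Unset Printing Implicit Defensive.
Import GRing.Theory.
Local Open Scope ring_scope.

(* Right R-modules are represented as left modules over the converse ring
   R^c : for m : M and r : R, the right action m r is written r *: m. *)

Section Submodules.
Variables (R : nzRingType) (M : lmodType R^c).

Definition submod (A : M -> Prop) : Prop :=
  A 0 /\ (forall x y, A x -> A y -> A (x + y)) /\
  (forall (r : R^c) x, A x -> A (r *: x)).

Definition subm (A B : M -> Prop) : Prop := forall x, A x -> B x.
Definition eqm (A B : M -> Prop) : Prop := forall x, A x <-> B x.
Definition fullm : M -> Prop := fun _ => True.
Definition zerom : M -> Prop := fun x => x = 0.
Definition addm (A B : M -> Prop) : M -> Prop :=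
  fun x => exists a b, A a /\ B b /\ x = a + b.
Definition capm (A B : M -> Prop) : M -> Prop := fun x => A x /\ B x.

Definition cyclicm (m : M) : M -> Prop := fun x => exists r : R^c, x = r *: m.

Definition fully_invariant (N : M -> Prop) : Prop :=
  forall (f : {linear M -> M}) x, N x -> N (f x).
Definition duo : Prop := forall N, submod N -> fully_invariant N.

Definition distributive : Prop :=
  forall A B C, submod A -> submod B -> submod C ->
    eqm (addm A (capm B C)) (capm (addm A B) (addm A C)).

Definition direct_summand (D : M -> Prop) : Prop :=
  submod D /\ exists D', submod D' /\ eqm (addm D D') fullm /\
                         eqm (capm D D') zerom.

(* K / X << M / X, for submodules X <= K of M, expressed through the
   correspondence between submodules of M/X and submodules of M containing X:
   every submodule L of M with X <= L and K + L = M equals M. *)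
Definition small_mod (X K : M -> Prop) : Prop :=
  forall L, submod L -> subm X L -> eqm (addm K L) fullm -> eqm L fullm.

Definition beta_star (X Y : M -> Prop) : Prop :=
  small_mod X (addm X Y) /\ small_mod Y (addm X Y).

Definition principally_Goldie_star_lifting : Prop :=
  forall m : M, exists D, direct_summand D /\ beta_star (cyclicm m) D.

End Submodules.

(* Main.v *)
Require Import Defs.
From HB Require Import structures.
From mathcomp Require Import all_boot all_order all_algebra.
Import GRing.Theory.
Local Open Scope ring_scope.

Section PG.
Variables (R : nzRingType) (M1 M2 : lmodType R^c).
Local Notation M := (M1 * M2)%type.

Lemma pg_add (x y : M) : x + y = (x.1 + y.1, x.2 + y.2). Proof. by []. Qed.
Lemma pg_scale (r : R^c) (x : M) : r *: x = (r *: x.1, r *: x.2). Proof. by []. Qed.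

Definition pg_p1 (x : M) : M := (x.1, 0).
Lemma pg_p1_lin : linear pg_p1.
Proof. move=> r x y; rewrite /pg_p1; congr pair => /=; by rewrite scaler0 addr0. Qed.
HB.instance Definition _ := GRing.isLinear.Build _ _ _ _ pg_p1 pg_p1_lin.
Definition pg_p2 (x : M) : M := (0, x.2).
Lemma pg_p2_lin : linear pg_p2.
Proof. move=> r x y; rewrite /pg_p2; congr pair => /=; by rewrite scaler0 addr0. Qed.
HB.instance Definition _ := GRing.isLinear.Build _ _ _ _ pg_p2 pg_p2_lin.

Definition splitP := forall N : M -> Prop, submod N ->
  forall a b, N (a, b) -> N (a, 0) /\ N (0, b).

Lemma pg_duo_split : duo M -> splitP.
Proof.
move=> H N sN a b Nab; split.
- exact: (H N sN pg_p1 (a, b) Nab).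
- exact: (H N sN pg_p2 (a, b) Nab).
Qed.

Lemma pg_sA1 : submod (fun x : M => x.1 = 0).
Proof.
split; first by [].
split; first by move=> x y hx hy; rewrite pg_add /= hx hy addr0.
by move=> r x hx; rewrite pg_scale /= hx scaler0.
Qed.

Lemma pg_sA2 : submod (fun x : M => x.2 = 0).
Proof.
split; first by [].
split; first by move=> x y hx hy; rewrite pg_add /= hx hy addr0.
by move=> r x hx; rewrite pg_scale /= hx scaler0.
Qed.

Lemma pg_distr_split : distributive M -> splitP.
Proof.
move=> H N sN a b Nab; split.
- have := (H _ N _ pg_sA1 sN pg_sA2 (a, 0)).2.
  case.
    split.
      exists (0, - b), (a, b); split; first by [].
      by split; [| rewrite pg_add /= add0r addNr].
    by exists (0, 0), (a, 0); split; [|split]; rewrite // pg_add /= !add0r.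
  move=> [u1 u2] [[v1 v2] [/= hu [[Nv /= hv] E]]].
  move: E; rewrite pg_add /= hu hv add0r addr0 => -[-> _].
  by rewrite -hv.
- have := (H _ N _ pg_sA2 sN pg_sA1 (0, b)).2.
  case.
    split.
      exists (- a, 0), (a, b); split; first by [].
      by split; [| rewrite pg_add /= add0r addNr].
    by exists (0, 0), (0, b); split; [|split]; rewrite // pg_add /= !add0r.
  move=> [u1 u2] [[v1 v2] [/= hu [[Nv /= hv] E]]].
  move: E; rewrite pg_add /= hu hv add0r addr0 => -[_ ->].
  by rewrite -hv.
Qed.

Lemma pg_sub1 (N : M -> Prop) : submod N -> submod (fun a : M1 => N (a, 0)).
Proof.
move=> [h0 [hD hZ]]; split; first exact: h0.
split.
  by move=> x y hx hy; have := hD _ _ hx hy; rewrite pg_add /= addr0.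
by move=> r x hx; have := hZ r _ hx; rewrite pg_scale /= scaler0.
Qed.

Lemma pg_sub2 (N : M -> Prop) : submod N -> submod (fun a : M2 => N (0, a)).
Proof.
move=> [h0 [hD hZ]]; split; first exact: h0.
split.
  by move=> x y hx hy; have := hD _ _ hx hy; rewrite pg_add /= addr0.
by move=> r x hx; have := hZ r _ hx; rewrite pg_scale /= scaler0.
Qed.

Lemma pg_lift1 (L : M1 -> Prop) : submod L -> submod (fun p : M => L p.1).
Proof.
move=> [h0 [hD hZ]]; split; first exact: h0.
split; first by move=> x y hx hy; exact: hD.
by move=> r x hx; exact: hZ.
Qed.

Lemma pg_lift2 (L : M2 -> Prop) : submod L -> submod (fun p : M => L p.2).
Proof.
move=> [h0 [hD hZ]]; split; first exact: h0.
split; first by move=> x y hx hy; exact: hD.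
by move=> r x hx; exact: hZ.
Qed.

Lemma pg_prod (A : M1 -> Prop) (B : M2 -> Prop) : submod A -> submod B ->
  submod (fun p : M => A p.1 /\ B p.2).
Proof.
move=> [a0 [aD aZ]] [b0 [bD bZ]]; split; first by split.
split; first by move=> x y [? ?] [? ?]; split; [exact: aD | exact: bD].
by move=> r x [? ?]; split; [exact: aZ | exact: bZ].
Qed.

Lemma pg_ds1 (D : M -> Prop) : splitP -> direct_summand D ->
  direct_summand (fun a : M1 => D (a, 0)).
Proof.
move=> sp [sD [D' [sD' [DD' DcD']]]]; split; first exact: pg_sub1.
exists (fun a => D' (a, 0)); split; first exact: pg_sub1.
split.
  move=> x; split => // _.
  have [[d1 d2] [[e1 e2] [Dd [De E]]]] := (DD' (x, 0)).2 I.
  exists d1, e1; split; first exact: (sp D sD d1 d2 Dd).1.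
  split; first exact: (sp D' sD' e1 e2 De).1.
  by case: E.
move=> x; split.
  by move=> [h1 h2]; have := (DcD' (x, 0)).1 (conj h1 h2); case.
by move=> ->; split; [exact: sD.1 | exact: sD'.1].
Qed.

Lemma pg_ds2 (D : M -> Prop) : splitP -> direct_summand D ->
  direct_summand (fun a : M2 => D (0, a)).
Proof.
move=> sp [sD [D' [sD' [DD' DcD']]]]; split; first exact: pg_sub2.
exists (fun a => D' (0, a)); split; first exact: pg_sub2.
split.
  move=> x; split => // _.
  have [[d1 d2] [[e1 e2] [Dd [De E]]]] := (DD' (0, x)).2 I.
  exists d2, e2; split; first exact: (sp D sD d1 d2 Dd).2.
  split; first exact: (sp D' sD' e1 e2 De).2.
  by case: E.
move=> x; split.
  by move=> [h1 h2]; have := (DcD' (0, x)).1 (conj h1 h2); case.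
by move=> ->; split; [exact: sD.1 | exact: sD'.1].
Qed.

Lemma pg_E1 (m1 : M1) (D : M -> Prop) (L : M1 -> Prop) :
  eqm (addm (addm (cyclicm m1) (fun a => D (a, 0))) L) (@fullm _ _) ->
  eqm (addm (addm (cyclicm (m1, 0 : M2)) D) (fun p : M => L p.1)) (@fullm _ _).
Proof.
move=> E [x1 x2]; split => // _.
have [u [l [[c [d [[r ->] [Dd ->]]]] [Ll ->]]]] := (E x1).2 I.
exists (r *: ((m1, 0) : M) + (d, 0)), (l, x2); split.
  exists (r *: ((m1, 0) : M)), (d, 0); split; first by exists r.
  by split.
split; first exact: Ll.
by rewrite !pg_add pg_scale /= scaler0 !add0r.
Qed.

Lemma pg_E2 (m2 : M2) (D : M -> Prop) (L : M2 -> Prop) :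
  eqm (addm (addm (cyclicm m2) (fun a => D (0, a))) L) (@fullm _ _) ->
  eqm (addm (addm (cyclicm (0 : M1, m2)) D) (fun p : M => L p.2)) (@fullm _ _).
Proof.
move=> E [x1 x2]; split => // _.
have [u [l [[c [d [[r ->] [Dd ->]]]] [Ll ->]]]] := (E x2).2 I.
exists (r *: ((0, m2) : M) + (0, d)), (x1, l); split.
  exists (r *: ((0, m2) : M)), (0, d); split; first by exists r.
  by split.
split; first exact: Ll.
by rewrite !pg_add pg_scale /= scaler0 !add0r.
Qed.

Lemma pg_fwd1 : splitP -> principally_Goldie_star_lifting M ->
  principally_Goldie_star_lifting M1.
Proof.
move=> sp H m1.
have [D [dsD [b1 b2]]] := H (m1, 0).
have sD := dsD.1.
exists (fun a => D (a, 0)); split; first exact: pg_ds1.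
split.
- move=> L sL cL E.
  have F : eqm (fun p : M => L p.1) (@fullm _ _).
    apply: (b1 _ (pg_lift1 _ sL) _ (pg_E1 _ _ _ E)).
    by move=> x [r ->]; apply: cL; exists r.
  by move=> x; split => // _; exact: ((F (x, 0)).2 I).
- move=> L sL cL E.
  have F : eqm (fun p : M => L p.1) (@fullm _ _).
    apply: (b2 _ (pg_lift1 _ sL) _ (pg_E1 _ _ _ E)).
    by move=> [x y] Dxy; apply: cL; exact: (sp D sD x y Dxy).1.
  by move=> x; split => // _; exact: ((F (x, 0)).2 I).
Qed.

Lemma pg_fwd2 : splitP -> principally_Goldie_star_lifting M ->
  principally_Goldie_star_lifting M2.
Proof.
move=> sp H m2.
have [D [dsD [b1 b2]]] := H (0, m2).
have sD := dsD.1.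
exists (fun a => D (0, a)); split; first exact: pg_ds2.
split.
- move=> L sL cL E.
  have F : eqm (fun p : M => L p.2) (@fullm _ _).
    apply: (b1 _ (pg_lift2 _ sL) _ (pg_E2 _ _ _ E)).
    by move=> x [r ->]; apply: cL; exists r.
  by move=> x; split => // _; exact: ((F (0, x)).2 I).
- move=> L sL cL E.
  have F : eqm (fun p : M => L p.2) (@fullm _ _).
    apply: (b2 _ (pg_lift2 _ sL) _ (pg_E2 _ _ _ E)).
    by move=> [x y] Dxy; apply: cL; exact: (sp D sD x y Dxy).2.
  by move=> x; split => // _; exact: ((F (0, x)).2 I).
Qed.

Lemma pg_B1 (sp : splitP) (m1 : M1) (m2 : M2) (D1 : M1 -> Prop) (D2 : M2 -> Prop)
  (L : M -> Prop) : submod L ->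
  eqm (addm (addm (cyclicm ((m1, m2) : M)) (fun p : M => D1 p.1 /\ D2 p.2)) L) (@fullm _ _) ->
  eqm (addm (addm (cyclicm m1) D1) (fun a => L (a, 0))) (@fullm _ _).
Proof.
move=> sL E x; split => // _.
have [u [l [[c [d [[r ->] [[Dd1 Dd2] ->]]]] [Ll Eq]]]] := (E (x, 0)).2 I.
move: l Ll Eq => [l1 l2] Ll Eq.
exists (r *: m1 + d.1), l1; split.
  exists (r *: m1), d.1; split; first by exists r.
  by split.
split; first exact: (sp L sL l1 l2 Ll).1.
exact: (congr1 fst Eq).
Qed.

Lemma pg_B2 (sp : splitP) (m1 : M1) (m2 : M2) (D1 : M1 -> Prop) (D2 : M2 -> Prop)
  (L : M -> Prop) : submod L ->
  eqm (addm (addm (cyclicm ((m1, m2) : M)) (fun p : M => D1 p.1 /\ D2 p.2)) L) (@fullm _ _) ->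
  eqm (addm (addm (cyclicm m2) D2) (fun a => L (0, a))) (@fullm _ _).
Proof.
move=> sL E x; split => // _.
have [u [l [[c [d [[r ->] [[Dd1 Dd2] ->]]]] [Ll Eq]]]] := (E (0, x)).2 I.
move: l Ll Eq => [l1 l2] Ll Eq.
exists (r *: m2 + d.2), l2; split.
  exists (r *: m2), d.2; split; first by exists r.
  by split.
split; first exact: (sp L sL l1 l2 Ll).2.
exact: (congr1 snd Eq).
Qed.

Lemma pg_bwd : splitP -> principally_Goldie_star_lifting M1 ->
  principally_Goldie_star_lifting M2 -> principally_Goldie_star_lifting M.
Proof.
move=> sp H1 H2 [m1 m2].
have [D1 [[sD1 [D1' [sD1' [DD1 DcD1]]]] [b11 b12]]] := H1 m1.
have [D2 [[sD2 [D2' [sD2' [DD2 DcD2]]]] [b21 b22]]] := H2 m2.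
exists (fun p : M => D1 p.1 /\ D2 p.2); split.
  split; first exact: pg_prod.
  exists (fun p : M => D1' p.1 /\ D2' p.2); split; first exact: pg_prod.
  split.
    move=> [x1 x2]; split => // _.
    have [d1 [e1 [h1 [h1' ->]]]] := (DD1 x1).2 I.
    have [d2 [e2 [h2 [h2' ->]]]] := (DD2 x2).2 I.
    by exists (d1, d2), (e1, e2).
  move=> [x1 x2]; split.
    move=> [[/= h1 h2] [/= h1' h2']].
    have := (DcD1 x1).1 (conj h1 h1'); have := (DcD2 x2).1 (conj h2 h2').
    by rewrite /zerom => -> ->.
  move=> E; have [-> ->] : x1 = 0 /\ x2 = 0 by case: E.
  by split; split; [exact: sD1.1 | exact: sD2.1 | exact: sD1'.1 | exact: sD2'.1].
have full : forall L : M -> Prop, submod L ->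
  eqm (fun a => L (a, 0)) (@fullm _ _) -> eqm (fun a => L (0, a)) (@fullm _ _) ->
  eqm L (@fullm _ _).
  move=> L sL F1 F2 [x1 x2]; split => // _.
  have := sL.2.1 _ _ ((F1 x1).2 I) ((F2 x2).2 I).
  by rewrite pg_add /= addr0 add0r.
split.
- move=> L sL cL E; apply: full => //.
  + apply: (b11 _ (pg_sub1 _ sL) _ (pg_B1 sp _ _ _ _ _ sL E)).
    move=> x [r ->].
    have := cL (r *: ((m1, m2) : M)) (ex_intro _ r erefl).
    rewrite pg_scale /=; exact: (fun h => (sp L sL _ _ h).1).
  + apply: (b21 _ (pg_sub2 _ sL) _ (pg_B2 sp _ _ _ _ _ sL E)).
    move=> x [r ->].
    have := cL (r *: ((m1, m2) : M)) (ex_intro _ r erefl).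
    rewrite pg_scale /=; exact: (fun h => (sp L sL _ _ h).2).
- move=> L sL cL E; apply: full => //.
  + apply: (b12 _ (pg_sub1 _ sL) _ (pg_B1 sp _ _ _ _ _ sL E)).
    move=> x Dx; apply: cL; split => //; exact: sD2.1.
  + apply: (b22 _ (pg_sub2 _ sL) _ (pg_B2 sp _ _ _ _ _ sL E)).
    move=> x Dx; apply: cL; split => //; exact: sD1.1.
Qed.

End PG.

Theorem proposition3p8 (R : nzRingType) (M1 M2 : lmodType R^c) :
  (duo (M1 * M2)%type \/ distributive (M1 * M2)%type) ->
  (principally_Goldie_star_lifting (M1 * M2)%type <->
   principally_Goldie_star_lifting M1 /\ principally_Goldie_star_lifting M2).
Proof.
move=> H.
have sp : @splitP R M1 M2.
  by case: H => H; [exact: (@pg_duo_split _ _ _ H) | exact: (@pg_distr_split _ _ _ H)].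
split.
  by move=> P; split; [exact: (@pg_fwd1 _ _ _ sp P) | exact: (@pg_fwd2 _ _ _ sp P)].
by move=> [P1 P2]; exact: (@pg_bwd _ _ _ sp P1 P2).
Qed.
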